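(* Assume (FS), let $E$ be a small subset of $\mathfrak C$ and $p\in S(E)$. The following are equivalent: (1) $p$ is $\operatorname{acl}$-stationary, i.e. $p$ has a unique extension to a complete type over $\operatorname{acl}(E)$; (2) $E\subseteq\operatorname{dcl}(Ea)$ is primary for some $a\models p$; (3) $E\subseteq\operatorname{dcl}(Ea)$ is primary for every $a\models p$.
   Context: $L$ is a first-order language, $T$ a complete $L$-theory, $\mathfrak C$ a monster model of $T$; $\operatorname{acl}$, $\operatorname{dcl}$ are computed in $\mathfrak C$. (FS): $T$ codes finite sets, i.e. every finite set of real tuples has a code which is a real tuple. For small $F\subseteq K$, the extension $F\subseteq K$ is primary if $\operatorname{dcl}(K)\cap\operatorname{acl}(F)=\operatorname{dcl}(F)$. *)

(* Defs.v *)
From mathcomp Require Import ssreflect ssrfun ssrbool eqtype ssrnat fintype.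
From Stdlib Require Import List.

Set Implicit Arguments.
Unset Strict Implicit.
Unset Printing Implicit Defensive.

Record language : Type := Language {
  Fsym : Type;                 (* function symbols (constants = arity 0) *)
  Rsym : Type;
  farity : Fsym -> nat;
  rarity : Rsym -> nat }.

(* Terms with variables indexed by nat and parameters (constants naming
   elements) taken from a type P. *)
Inductive term (L : language) (P : Type) : Type :=
| tvar : nat -> term L P
| tpar : P -> term L P
| tfun : forall f : Fsym L, ('I_(farity f) -> term L P) -> term L P.

Inductive formula (L : language) (P : Type) : Type :=
| fEq  : term L P -> term L P -> formula L P
| fRel : forall r : Rsym L, ('I_(rarity r) -> term L P) -> formula L P
| fNot : formula L P -> formula L P
| fAnd : formula L P -> formula L P -> formula L P
| fEx  : nat -> formula L P -> formula L P.   (* fEx k phi = exists x_k, phi *)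

Arguments tvar {L P}.
Arguments tpar {L P}.
Arguments fNot {L P}.
Arguments fAnd {L P}.
Arguments fEx {L P}.

Fixpoint tfree L P (n : nat) (t : term L P) : Prop :=
  match t with
  | tvar k => k = n
  | tpar _ => False
  | tfun f args => exists i, tfree n (args i)
  end.

Fixpoint ffree L P (n : nat) (phi : formula L P) : Prop :=
  match phi with
  | fEq t1 t2 => tfree n t1 \/ tfree n t2
  | fRel r args => exists i, tfree n (args i)
  | fNot psi => ffree n psi
  | fAnd psi chi => ffree n psi \/ ffree n chi
  | fEx k psi => k <> n /\ ffree n psi
  end.

Fixpoint tparams L P (A : P -> Prop) (t : term L P) : Prop :=
  match t with
  | tvar _ => True
  | tpar p => A p
  | tfun f args => forall i, tparams A (args i)
  end.

Fixpoint fparams L P (A : P -> Prop) (phi : formula L P) : Prop :=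
  match phi with
  | fEq t1 t2 => tparams A t1 /\ tparams A t2
  | fRel r args => forall i, tparams A (args i)
  | fNot psi => fparams A psi
  | fAnd psi chi => fparams A psi /\ fparams A chi
  | fEx _ psi => fparams A psi
  end.

Record structure (L : language) : Type := Structure {
  carrier :> Type;
  fun_int : forall f : Fsym L, ('I_(farity f) -> carrier) -> carrier;
  rel_int : forall r : Rsym L, ('I_(rarity r) -> carrier) -> Prop }.

Definition update (X : Type) (v : nat -> X) (n : nat) (x : X) : nat -> X :=
  fun k => if Nat.eqb k n then x else v k.

Fixpoint teval L (M : structure L) P (par : P -> M) (v : nat -> M)
  (t : term L P) : M :=
  match t with
  | tvar k => v k
  | tpar p => par p
  | tfun f args => @fun_int L M f (fun i => teval par v (args i))
  end.

Fixpoint sat L (M : structure L) P (par : P -> M) (v : nat -> M)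
  (phi : formula L P) : Prop :=
  match phi with
  | fEq t1 t2 => teval par v t1 = teval par v t2
  | fRel r args => @rel_int L M r (fun i => teval par v (args i))
  | fNot psi => ~ sat par v psi
  | fAnd psi chi => sat par v psi /\ sat par v chi
  | fEx k psi => exists x : M, sat par (update v k x) psi
  end.

Definition sentence L (phi : formula L Empty_set) : Prop :=
  forall n, ~ ffree n phi.

Definition no_par L (M : structure L) : Empty_set -> M :=
  fun e => match e with end.

Definition complete_theory L (T : formula L Empty_set -> Prop) : Prop :=
  (forall phi, T phi -> sentence phi) /\
  (forall phi, sentence phi -> T phi \/ T (fNot phi)).

Definition models L (M : structure L) (T : formula L Empty_set -> Prop) : Prop :=
  forall phi, T phi -> forall v : nat -> M, sat (no_par M) v phi.

Section InC.
Variable L : language.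
Variable C : structure L.

Definition fml := formula L C.

Definition LB_formula (n : nat) (B : C -> Prop) (phi : fml) : Prop :=
  fparams B phi /\ (forall k, ffree k phi -> (k < n)%coq_nat).

Definition sat_tuple (n : nat) (a : 'I_n -> C) (phi : fml) : Prop :=
  forall v : nat -> C, (forall i : 'I_n, v (nat_of_ord i) = a i) -> sat id v phi.

Definition complete_type (n : nat) (B : C -> Prop) (p : fml -> Prop) : Prop :=
  (forall phi, p phi -> LB_formula n B phi) /\
  (forall phi, LB_formula n B phi -> p phi \/ p (fNot phi)) /\
  (forall l : list fml, (forall phi, In phi l -> p phi) ->
     exists v : nat -> C, forall phi, In phi l -> sat id v phi).

Definition realizes (n : nat) (a : 'I_n -> C) (p : fml -> Prop) : Prop :=
  forall phi, p phi -> sat_tuple a phi.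

Definition sat1 (phi : fml) (c : C) : Prop :=
  forall v : nat -> C, v 0 = c -> sat id v phi.

Definition dcl (A : C -> Prop) : C -> Prop := fun b =>
  exists phi, LB_formula 1 A phi /\ (forall c, sat1 phi c <-> c = b).

Definition acl (A : C -> Prop) : C -> Prop := fun b =>
  exists phi, LB_formula 1 A phi /\ sat1 phi b /\
    exists l : list C, forall c, sat1 phi c -> In c l.

Definition primary (F K : C -> Prop) : Prop :=
  (forall x, F x -> K x) /\
  (forall x, (dcl K x /\ acl F x) <-> dcl F x).

Definition acl_stationary (n : nat) (E : C -> Prop) (p : fml -> Prop) : Prop :=
  exists q, complete_type n (acl E) q /\ (forall phi, p phi -> q phi) /\
    forall q', complete_type n (acl E) q' -> (forall phi, p phi -> q' phi) ->
      forall phi, q' phi <-> q phi.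

Definition add_tuple (E : C -> Prop) (n : nat) (a : 'I_n -> C) : C -> Prop :=
  fun x => E x \/ exists i : 'I_n, x = a i.

Definition automorphism (s : C -> C) : Prop :=
  (exists s' : C -> C, (forall x, s' (s x) = x) /\ (forall x, s (s' x) = x)) /\
  (forall f args, s (@fun_int L C f args) = @fun_int L C f (fun i => s (args i))) /\
  (forall r args, @rel_int L C r args <-> @rel_int L C r (fun i => s (args i))).

Definition elementary_on (A : C -> Prop) (f : C -> C) : Prop :=
  forall phi : fml, fparams A phi ->
    forall v : nat -> C, (forall k, A (v k)) ->
      (sat id v phi <-> sat f (fun k => f (v k)) phi).

(** (FS): every finite set of real tuples has a real tuple as a code *)
Definition mem_tuple (n : nat) (t : 'I_n -> C) (S : list ('I_n -> C)) : Prop :=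
  exists t', In t' S /\ forall i, t i = t' i.

Definition fixes_setwise (s : C -> C) (n : nat) (S : list ('I_n -> C)) : Prop :=
  (forall t, mem_tuple t S -> mem_tuple (fun i => s (t i)) S) /\
  (forall u, mem_tuple u S -> exists t, mem_tuple t S /\ forall i, s (t i) = u i).

Definition codes_finite_sets : Prop :=
  forall (n : nat) (S : list ('I_n -> C)),
    exists (m : nat) (c : 'I_m -> C),
      forall s, automorphism s ->
        (fixes_setwise s S <-> forall j, s (c j) = c j).

End InC.

Definition lt_card (X Y : Type) : Prop :=
  (exists f : X -> Y, forall x y, f x = f y -> x = y) /\
  ~ (exists g : Y -> X, forall x y, g x = g y -> x = y).

Definition small (kappa : Type) (X : Type) (A : X -> Prop) : Prop :=
  lt_card {x : X | A x} kappa.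

(* C is a monster model: kappa-saturated and strongly kappa-homogeneous for
   an (uncountable) kappa > |L| + aleph_0; "small" means of size < kappa. *)
Record monster L (C : structure L) (kappa : Type) : Prop := Monster {
  monster_inhabited : inhabited C;
  monster_kappa_uncountable : lt_card nat kappa;
  monster_kappa_language : lt_card (Fsym L + Rsym L) kappa;
  monster_saturated : forall (B : C -> Prop) (n : nat) (p : fml C -> Prop),
      small kappa B -> complete_type n B p ->
      exists a : 'I_n -> C, realizes a p;
  monster_homogeneous : forall (A : C -> Prop) (f : C -> C),
      small kappa A -> elementary_on A f ->
      exists s, automorphism s /\ forall x, A x -> s x = f x }.

(* Main.v *)
Require Import Defs.
From mathcomp Require Import ssreflect ssrfun ssrbool eqtype ssrnat seq fintype finfun.
From mathcomp Require classical_sets.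
From Stdlib Require Import Lia List Classical ClassicalEpsilon FunctionalExtensionality PropExtensionality ProofIrrelevance.

Set Implicit Arguments.
Unset Strict Implicit.
Unset Printing Implicit Defensive.


Section Syn.
Variable L : language.

Lemma term_ind' (P : Type) (Q : term L P -> Prop) :
  (forall k, Q (tvar k)) -> (forall c, Q (tpar c)) ->
  (forall f args, (forall i, Q (args i)) -> Q (@tfun _ _ f args)) -> forall t, Q t.
Proof.
move=> H1 H2 H3; fix IH 1 => t; case: t => [k|c|f args].
- exact: H1.
- exact: H2.
- apply: H3 => i; exact: IH.
Qed.

Lemma update_same X (v : nat -> X) k x : update v k x k = x.
Proof. by rewrite /update PeanoNat.Nat.eqb_refl. Qed.

Lemma update_other X (v : nat -> X) k x j : j <> k -> update v k x j = v j.
Proof. by move=> H; rewrite /update; move/PeanoNat.Nat.eqb_neq: H => ->. Qed.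

Lemma teval_coinc (M : structure L) P (par par' : P -> M) u u' t :
  tparams (fun c => par c = par' c) t -> (forall k, tfree k t -> u k = u' k) ->
  teval par u t = teval par' u' t.
Proof.
elim/term_ind': t => [k|c|f args IH] /= Hp Hf.
- exact: Hf.
- exact: Hp.
- congr (fun_int _); apply: functional_extensionality => i.
  apply: IH; first exact: Hp.
  move=> k Hk; apply: Hf; by exists i.
Qed.

Lemma sat_coinc (M : structure L) P (par par' : P -> M) phi : forall u u',
  fparams (fun c => par c = par' c) phi -> (forall k, ffree k phi -> u k = u' k) ->
  (sat par u phi <-> sat par' u' phi).
Proof.
elim: phi => [t1 t2|r args|psi IH|psi IH chi IH'|k psi IH] u u' /= Hp Hf.
- rewrite (teval_coinc (u':=u') (par':=par') (proj1 Hp)); last by move=> j Hj; apply: Hf; left.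
  rewrite (teval_coinc (u:=u) (u':=u') (par':=par') (proj2 Hp)) //; by move=> j Hj; apply: Hf; right.
- have -> : (fun i => teval par u (args i)) = (fun i => teval par' u' (args i)); last by [].
  apply: functional_extensionality => i; apply: teval_coinc; first exact: Hp.
  by move=> j Hj; apply: Hf; exists i.
- by rewrite (IH u u').
- rewrite (IH u u') ?(IH' u u') //; try tauto.
  + by move=> j Hj; apply: Hf; right.
  + by move=> j Hj; apply: Hf; left.
- have H : forall x, sat par (update u k x) psi <-> sat par' (update u' k x) psi.
    move=> x; apply: IH => // j Hj.
    case: (PeanoNat.Nat.eq_dec j k) => [->|ne]; first by rewrite !update_same.
    rewrite !update_other //; apply: Hf; split => //; by move=> E; apply: ne.
  by split=> -[x Hx]; exists x; apply/H.
Qed.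

Fixpoint tcl P (s : nat -> option P) (t : term L P) : term L P :=
  match t with
  | tvar k => match s k with Some c => tpar c | None => tvar k end
  | tpar c => tpar c
  | @tfun _ _ f args => @tfun _ _ f (fun i => tcl s (args i))
  end.

Fixpoint fcl P (s : nat -> option P) (phi : formula L P) : formula L P :=
  match phi with
  | fEq t1 t2 => fEq (tcl s t1) (tcl s t2)
  | @fRel _ _ r args => @fRel _ _ r (fun i => tcl s (args i))
  | fNot psi => fNot (fcl s psi)
  | fAnd psi chi => fAnd (fcl s psi) (fcl s chi)
  | fEx k psi => fEx k (fcl (fun j => if Nat.eqb j k then None else s j) psi)
  end.

Definition smod (M : Type) P (par : P -> M) (s : nat -> option P) (u : nat -> M) :=
  fun k => match s k with Some c => par c | None => u k end.

Lemma teval_cl (M : structure L) P (par : P -> M) s u t :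
  teval par u (tcl s t) = teval par (smod par s u) t.
Proof.
elim/term_ind': t => [k|c|f args IH] //=.
- by rewrite /smod; case: (s k).
- by congr (fun_int _); apply: functional_extensionality => i.
Qed.

Lemma sat_cl (M : structure L) P (par : P -> M) phi : forall s u,
  sat par u (fcl s phi) <-> sat par (smod par s u) phi.
Proof.
elim: phi => [t1 t2|r args|psi IH|psi IH chi IH'|k psi IH] s u /=.
- by rewrite !teval_cl.
- have -> // : (fun i => teval par u (tcl s (args i))) = (fun i => teval par (smod par s u) (args i)).
  by apply: functional_extensionality => i; rewrite teval_cl.
- by rewrite IH.
- by rewrite IH IH'.
- split=> -[x Hx]; exists x; move: Hx; rewrite IH;
  (have -> // : smod par (fun j => if Nat.eqb j k then None else s j) (update u k x)
        = update (smod par s u) k x);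
  apply: functional_extensionality => j; rewrite /smod /update;
  by case: (Nat.eqb j k).
Qed.

Lemma tfree_cl P s t j : tfree j (@tcl P s t) -> tfree j t /\ s j = None.
Proof.
elim/term_ind': t => [k|c|f args IH] //=.
- case E: (s k) => [c|] //= <-; by split.
- by move=> [i /IH [H1 H2]]; split=> //; exists i.
Qed.

Lemma ffree_cl P phi : forall s j, ffree j (@fcl P s phi) -> ffree j phi /\ s j = None.
Proof.
elim: phi => [t1 t2|r args|psi IH|psi IH chi IH'|k psi IH] s j /=.
- by case=> /tfree_cl [? ?]; split=> //; [left|right].
- by move=> [i /tfree_cl [? ?]]; split=> //; exists i.
- exact: IH.
- case=> [/IH [? ?]|/IH' [? ?]]; split=> //; tauto.
- move=> [ne /IH [H1 H2]]; split=> //.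
  by move: H2; move/PeanoNat.Nat.eqb_neq: (nesym ne) => ->.
Qed.

Lemma tparams_cl P (A : P -> Prop) s t :
  (forall k c, s k = Some c -> A c) -> tparams A t -> tparams A (tcl s t).
Proof.
move=> Hs; elim/term_ind': t => [k|c|f args IH] //=.
- by case E: (s k) => [c|] //= _; exact: Hs E.
- by move=> H i; apply: IH.
Qed.

Lemma fparams_cl P (A : P -> Prop) phi : forall s,
  (forall k c, s k = Some c -> A c) -> fparams A phi -> fparams A (fcl s phi).
Proof.
elim: phi => [t1 t2|r args|psi IH|psi IH chi IH'|k psi IH] s Hs /=.
- by case=> ? ?; split; apply: tparams_cl.
- by move=> H i; apply: tparams_cl.
- exact: IH.
- by case=> ? ?; split; [apply: IH|apply: IH'].
- apply: IH => j c; case: (Nat.eqb j k) => //; exact: Hs.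
Qed.

Fixpoint tsh P (m : nat) (t : term L P) : term L P :=
  match t with
  | tvar k => tvar (k + m)
  | tpar c => tpar c
  | @tfun _ _ f args => @tfun _ _ f (fun i => tsh m (args i))
  end.

Fixpoint fsh P (m : nat) (phi : formula L P) : formula L P :=
  match phi with
  | fEq t1 t2 => fEq (tsh m t1) (tsh m t2)
  | @fRel _ _ r args => @fRel _ _ r (fun i => tsh m (args i))
  | fNot psi => fNot (fsh m psi)
  | fAnd psi chi => fAnd (fsh m psi) (fsh m chi)
  | fEx k psi => fEx (k + m) (fsh m psi)
  end.

Lemma teval_sh (M : structure L) P (par : P -> M) m u t :
  teval par u (tsh m t) = teval par (fun k => u (k + m)) t.
Proof.
elim/term_ind': t => [k|c|f args IH] //=.
by congr (fun_int _); apply: functional_extensionality => i.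
Qed.

Lemma sat_sh (M : structure L) P (par : P -> M) m phi : forall u,
  sat par u (fsh m phi) <-> sat par (fun k => u (k + m)) phi.
Proof.
elim: phi => [t1 t2|r args|psi IH|psi IH chi IH'|k psi IH] u /=.
- by rewrite !teval_sh.
- have -> // : (fun i => teval par u (tsh m (args i))) = (fun i => teval par (fun k => u (k + m)) (args i)).
  by apply: functional_extensionality => i; rewrite teval_sh.
- by rewrite IH.
- by rewrite IH IH'.
- split=> -[x Hx]; exists x; move: Hx; rewrite IH;
  (have -> // : (fun j => update u (k + m) x (j + m)) = update (fun j => u (j + m)) k x);
  apply: functional_extensionality => j; rewrite /update;
  case: (PeanoNat.Nat.eqb_spec (j+m) (k+m)) => H1; case: (PeanoNat.Nat.eqb_spec j k) => H2 //; exfalso; first [by apply: H2; apply: (@addIn m) | by apply: H1; rewrite H2].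
Qed.

Lemma tfree_sh P m t j : tfree j (@tsh P m t) -> exists i, j = i + m /\ tfree i t.
Proof.
elim/term_ind': t => [k|c|f args IH] //=.
- by move=> <-; exists k.
- by move=> [i /IH [i' [-> H]]]; exists i'; split=> //; exists i.
Qed.

Lemma ffree_sh P m phi : forall j, ffree j (@fsh P m phi) -> exists i, j = i + m /\ ffree i phi.
Proof.
elim: phi => [t1 t2|r args|psi IH|psi IH chi IH'|k psi IH] j /=.
- by case=> /tfree_sh [i [-> H]]; exists i; split=> //; [left|right].
- by move=> [i' /tfree_sh [i [-> H]]]; exists i; split=> //; exists i'.
- exact: IH.
- case=> [/IH [i [-> H]]|/IH' [i [-> H]]]; exists i; split=> //; tauto.
- move=> [ne /IH [i [Ej H]]]; exists i; split=> //; split=> //; move=> E; apply: ne; by rewrite Ej E.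
Qed.

Lemma tparams_sh P (A : P -> Prop) m t : tparams A t -> tparams A (tsh m t).
Proof. elim/term_ind': t => [k|c|f args IH] //= H i; exact: IH. Qed.

Lemma fparams_sh P (A : P -> Prop) m phi : fparams A phi -> fparams A (fsh m phi).
Proof.
elim: phi => [t1 t2|r args|psi IH|psi IH chi IH'|k psi IH] /=.
- by case=> ? ?; split; apply: tparams_sh.
- by move=> H i; apply: tparams_sh.
- exact: IH.
- by case=> ? ?; split; [apply: IH|apply: IH'].
- exact: IH.
Qed.

Fixpoint nob P (m : nat) (phi : formula L P) : Prop :=
  match phi with
  | fNot psi => nob m psi
  | fAnd psi chi => nob m psi /\ nob m chi
  | fEx k psi => m <= k /\ nob m psi
  | _ => True
  end.

Lemma nob_sh P m (phi : formula L P) : nob m (fsh m phi).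
Proof.
elim: phi => [t1 t2|r args|psi IH|psi IH chi IH'|k psi IH] //=.
by split=> //; rewrite leq_addl.
Qed.

Fixpoint trp P (g : P -> option nat) (t : term L P) : term L P :=
  match t with
  | tvar k => tvar k
  | tpar c => match g c with Some i => tvar i | None => tpar c end
  | tfun f args => @tfun _ _ f (fun i => trp g (args i))
  end.

Fixpoint frp P (g : P -> option nat) (phi : formula L P) : formula L P :=
  match phi with
  | fEq t1 t2 => fEq (trp g t1) (trp g t2)
  | fRel r args => @fRel _ _ r (fun i => trp g (args i))
  | fNot psi => fNot (frp g psi)
  | fAnd psi chi => fAnd (frp g psi) (frp g chi)
  | fEx k psi => fEx k (frp g psi)
  end.

Definition gpar (M : Type) P (g : P -> option nat) (par : P -> M) (u : nat -> M) :=
  fun c => match g c with Some i => u i | None => par c end.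

Lemma teval_rp (M : structure L) P (par : P -> M) g u t :
  teval par u (trp g t) = teval (gpar g par u) u t.
Proof.
elim/term_ind': t => [k|c|f args IH] //=.
- by rewrite /gpar; case: (g c).
- by congr (fun_int _); apply: functional_extensionality => i.
Qed.

Lemma sat_rp (M : structure L) P (par : P -> M) g m phi :
  (forall c i, g c = Some i -> i < m) -> nob m phi -> forall u,
  sat par u (frp g phi) <-> sat (gpar g par u) u phi.
Proof.
move=> Hg; elim: phi => [t1 t2|r args|psi IH|psi IH chi IH'|k psi IH] /= Hn u.
- by rewrite !teval_rp.
- have -> // : (fun i => teval par u (trp g (args i))) = (fun i => teval (gpar g par u) u (args i)).
  by apply: functional_extensionality => i; rewrite teval_rp.
- by rewrite IH.
- by rewrite IH ?IH' //; case: Hn.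
- case: Hn => Hk Hn.
  have E : forall x, gpar g par (update u k x) = gpar g par u.
    move=> x; apply: functional_extensionality => c; rewrite /gpar.
    case E: (g c) => [i|] //; rewrite update_other //.
    move=> ik; have := Hg _ _ E; rewrite ik; move=> H.
    by move: (leq_trans H Hk); rewrite ltnn.
  by split=> -[x Hx]; exists x; move: Hx; rewrite IH // E.
Qed.

Lemma tfree_rp P g t j : tfree j (@trp P g t) -> tfree j t \/ exists c, g c = Some j.
Proof.
elim/term_ind': t => [k|c|f args IH] //=.
- by move=> ->; left.
- case E: (g c) => [i|] //= <-; right; by exists c.
- move=> [i /IH [H|H]]; last by right.
  by left; exists i.
Qed.

Lemma ffree_rp P g phi : forall j, ffree j (@frp P g phi) -> ffree j phi \/ exists c, g c = Some j.
Proof.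
elim: phi => [t1 t2|r args|psi IH|psi IH chi IH'|k psi IH] j /=.
- by case=> /tfree_rp [H|H]; try (by right); left; [left|right].
- by move=> [i /tfree_rp [H|H]]; try (by right); left; exists i.
- exact: IH.
- case=> [/IH [H|H]|/IH' [H|H]]; try (by right); left; tauto.
- by move=> [ne /IH [H|H]]; [left|right].
Qed.

Lemma tparams_rp P (A : P -> Prop) g t :
  tparams (fun c => g c = None -> A c) t -> tparams A (trp g t).
Proof.
elim/term_ind': t => [k|c|f args IH] //=.
- by case: (g c) => [i|] // H; apply: H.
- by move=> H i; apply: IH.
Qed.

Lemma fparams_rp P (A : P -> Prop) g phi :
  fparams (fun c => g c = None -> A c) phi -> fparams A (frp g phi).
Proof.
elim: phi => [t1 t2|r args|psi IH|psi IH chi IH'|k psi IH] /=.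
- by case=> ? ?; split; apply: tparams_rp.
- by move=> H i; apply: tparams_rp.
- exact: IH.
- by case=> ? ?; split; [apply: IH|apply: IH'].
- exact: IH.
Qed.

Lemma tparams_mono P (A B : P -> Prop) (t : term L P) : (forall c, A c -> B c) -> tparams A t -> tparams B t.
Proof. move=> H; elim/term_ind': t => [k|c|f args IH] //=; [exact: H|by move=> H' i; apply: IH]. Qed.

Lemma fparams_mono P (A B : P -> Prop) (phi : formula L P) : (forall c, A c -> B c) -> fparams A phi -> fparams B phi.
Proof.
move=> H; elim: phi => [t1 t2|r args|psi IH|psi IH chi IH'|k psi IH] /=.
- by case=> ? ?; split; apply: (tparams_mono H).
- by move=> H' i; apply: (tparams_mono H).
- exact: IH.
- by case=> ? ?; split; [apply: IH|apply: IH'].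
- exact: IH.
Qed.

End Syn.


Section Aut.
Variable L : language.
Variable C : structure L.

Lemma aut_inj (s : C -> C) : automorphism s -> forall x y, s x = s y -> x = y.
Proof. move=> [[s' [H1 H2]] _] x y E; by rewrite -(H1 x) -(H1 y) E. Qed.

Lemma aut_id : automorphism (fun x : C => x).
Proof.
split; first by exists (fun x => x).
split=> //.
Qed.

Lemma aut_comp (s t : C -> C) : automorphism s -> automorphism t -> automorphism (fun x => s (t x)).
Proof.
move=> [[s' [H1 H2]] [Hf Hr]] [[t' [H1' H2']] [Hf' Hr']]; split.
- exists (fun x => t' (s' x)); split=> x; by rewrite ?H1 ?H1' ?H2' ?H2.
- split=> [f args|r args]; first by rewrite Hf' Hf.
  by rewrite Hr' Hr.
Qed.

Lemma aut_inv (s : C -> C) : automorphism s ->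
  exists s', automorphism s' /\ (forall x, s' (s x) = x) /\ (forall x, s (s' x) = x).
Proof.
move=> Hs; have Hi := aut_inj Hs.
case: Hs => [[s' [H1 H2]] [Hf Hr]]; exists s'; split=> //; split.
- by exists s.
- split=> [f args|r args].
  + apply: Hi; rewrite H2 Hf; congr (fun_int _); apply: functional_extensionality => i.
    by rewrite H2.
  + rewrite (Hr r (fun i => s' (args i))); have -> // : (fun i => s (s' (args i))) = args.
    by apply: functional_extensionality => i; rewrite H2.
Qed.

Lemma teval_aut P (s : C -> C) (par : P -> C) u t : automorphism s ->
  teval (fun c => s (par c)) (fun k => s (u k)) t = s (teval par u t).
Proof.
move=> [_ [Hf _]]; elim/term_ind': t => [k|c|f args IH] //=.
by rewrite Hf; congr (fun_int _); apply: functional_extensionality => i.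
Qed.

Lemma sat_aut P (s : C -> C) (par : P -> C) (phi : formula L P) : automorphism s -> forall u,
  sat par u phi <-> sat (fun c => s (par c)) (fun k => s (u k)) phi.
Proof.
move=> Hs; have Hi := aut_inj Hs; have [s' [_ [H1 H2]]] := aut_inv Hs.
elim: phi => [t1 t2|r args|psi IH|psi IH chi IH'|k psi IH] u /=.
- rewrite !teval_aut //; split=> [->//|]; exact: Hi.
- have -> : (fun i => teval (fun c => s (par c)) (fun k => s (u k)) (args i)) = (fun i => s (teval par u (args i))).
    by apply: functional_extensionality => i; rewrite teval_aut.
  by case: Hs => _ [_ Hr]; apply: Hr.
- by rewrite IH.
- by rewrite IH IH'.
- have E : forall x, (fun j => s (update u k x j)) = update (fun j => s (u j)) k (s x).
    move=> x; apply: functional_extensionality => j; rewrite /update; by case: (Nat.eqb j k).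
  split=> -[x Hx].
  + by exists (s x); rewrite -E -IH.
  + exists (s' x); rewrite IH E H2 //.
Qed.

Lemma sat_aut_fix (s : C -> C) (A : C -> Prop) (phi : fml C) u : automorphism s ->
  (forall x, A x -> s x = x) -> fparams A phi ->
  (sat id u phi <-> sat id (fun k => s (u k)) phi).
Proof.
move=> Hs HA Hp; rewrite (sat_aut id phi Hs).
apply: sat_coinc => //; apply: (fparams_mono _ Hp) => c Hc; exact: HA.
Qed.

Lemma tparams_true P (t : term L P) : tparams (fun _ => True) t.
Proof. by elim/term_ind': t => //=. Qed.

Lemma fparams_true P (phi : formula L P) : fparams (fun _ => True) phi.
Proof. elim: phi => //= *; try split => //; apply: tparams_true. Qed.

Definition vext m (b : 'I_m -> C) (c0 : C) : nat -> C :=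
  fun k => odflt c0 (omap b (insub k)).

Lemma vextE m (b : 'I_m -> C) c0 (i : 'I_m) : vext b c0 i = b i.
Proof. by rewrite /vext valK. Qed.

Lemma sat_tuple_vext m (b : 'I_m -> C) c0 (A : C -> Prop) phi : LB_formula m A phi ->
  (sat_tuple b phi <-> sat id (vext b c0) phi).
Proof.
move=> [_ Hf]; split=> [H|H v Hv]; first by apply: H => i; rewrite vextE.
have P1 : fparams (fun c : C => id c = id c) phi.
  by apply: (fparams_mono (A := fun _ => True)) => //; apply: fparams_true.
have P2 : forall k, ffree k phi -> vext b c0 k = v k.
  move=> k /Hf /ltP km; have -> : k = nat_of_ord (Ordinal km) by [].
  by rewrite vextE Hv.
exact: (proj1 (@sat_coinc L C C id id phi (vext b c0) v P1 P2) H).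
Qed.
End Aut.


Section KL.
Variable L : language.
Variable C : structure L.

Definition gi (A : C -> Prop) m (b : 'I_m -> C) (c : C) : option 'I_m :=
  match excluded_middle_informative (exists i, c = b i /\ ~ A c) with
  | left H => Some (proj1_sig (constructive_indefinite_description _ H))
  | right _ => None
  end.

Lemma gi_some A m (b : 'I_m -> C) c i : gi A b c = Some i -> c = b i /\ ~ A c.
Proof.
rewrite /gi; case: excluded_middle_informative => // H [<-].
by case: constructive_indefinite_description.
Qed.

Lemma gi_none A m (b : 'I_m -> C) c : gi A b c = None -> ~ exists i, c = b i /\ ~ A c.
Proof. by rewrite /gi; case: excluded_middle_informative. Qed.

Lemma KL (A : C -> Prop) m (b b' : 'I_m -> C) (c0 : C) :
  (forall chi, LB_formula m A chi -> sat_tuple b chi -> sat_tuple b' chi) ->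
  exists f, elementary_on (add_tuple A b) f /\ (forall x, A x -> f x = x) /\
            (forall i, f (b i) = b' i).
Proof.
move=> HT.
have h1 : forall i, A (b i) -> b' i = b i.
  move=> i Ai.
  have H : sat_tuple b' (fEq (tvar (nat_of_ord i)) (tpar (b i)) : fml C).
    apply: HT.
    - split; first by split.
      by move=> k [/= <-|//]; apply/ltP.
    - by move=> v Hv /=; rewrite Hv.
  by have := H (vext b' c0) (vextE b' c0); rewrite /= vextE.
have h2 : forall i j, b i = b j -> b' i = b' j.
  move=> i j E.
  have H : sat_tuple b' (fEq (tvar (nat_of_ord i)) (tvar (nat_of_ord j)) : fml C).
    apply: HT.
    - split; first by split.
      by move=> k [/= <-|/= <-]; apply/ltP.
    - by move=> v Hv /=; rewrite !Hv.
  by have := H (vext b' c0) (vextE b' c0); rewrite /= !vextE.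
pose g := fun c => omap (@nat_of_ord m) (gi A b c).
pose f := fun c => match gi A b c with Some i => b' i | None => c end.
have Hg : forall c i, g c = Some i -> i < m.
  move=> c i; rewrite /g; case: (gi A b c) => [j|] //= [<-]; exact: ltn_ord.
have fA : forall x, A x -> f x = x.
  move=> x Ax; rewrite /f; case E: (gi A b x) => [i|] //.
  by have [_ ?] := gi_some E.
have fb : forall i, f (b i) = b' i.
  move=> i; rewrite /f; case E: (gi A b (b i)) => [j|].
  - by have [Ej _] := gi_some E; apply: h2.
  - have := gi_none E => H.
    rewrite h1 //; apply: NNPP => nA; apply: H; by exists i.
exists f; split=> //.
have main : forall phi : fml C, fparams (add_tuple A b) phi ->
    forall v : nat -> C, (forall k, add_tuple A b (v k)) ->
    sat id v phi -> sat f (fun k => f (v k)) phi.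
  move=> phi Hp v Hv Hs.
  pose s := fun k => Some (v k) : option C.
  pose psi := fcl s phi.
  pose chi := frp g (fsh m psi).
  have LBchi : LB_formula m A chi.
    split.
    - apply: fparams_rp; apply: fparams_sh; apply: fparams_cl.
      + move=> k c [<-] Hn; case: (Hv k) => // -[i Ei].
        apply: NNPP => nA; move: Hn; rewrite /g; case E: (gi A b (v k)) => //= _.
        apply: (gi_none E); by exists i.
      + apply: (fparams_mono _ Hp) => c Hc Hn; case: Hc => // -[i Ei].
        apply: NNPP => nA; move: Hn; rewrite /g; case E: (gi A b c) => //= _.
        apply: (gi_none E); by exists i.
    - move=> k /ffree_rp [/ffree_sh [i [_ /ffree_cl [_ //]]]|[c Hc]].
      by apply/ltP; exact: Hg Hc.
  have E1 : forall (w : nat -> C) (par : C -> C), sat par w chi <-> sat (gpar g par w) (fun k => (gpar g par w) (v k)) phi.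
    move=> w par; rewrite /chi (sat_rp par Hg (nob_sh m psi)) sat_sh /psi sat_cl.
    by have -> : smod (gpar g par w) s (fun k => w (k + m)) = (fun k => gpar g par w (v k)).
  have Sb : sat_tuple b chi.
    move=> w Hw; apply/E1.
    have -> : gpar g id w = id; last by [].
    apply: functional_extensionality => c; rewrite /gpar /g.
    case E: (gi A b c) => [i|] //=; have [-> _] := gi_some E; exact: Hw.
  have := HT _ LBchi Sb (vext b' c0) (vextE b' c0).
  move/E1; have -> // : gpar g id (vext b' c0) = f.
  apply: functional_extensionality => c; rewrite /gpar /g /f.
  by case E: (gi A b c) => [i|] //=; rewrite vextE.
move=> phi Hp v Hv; split; first exact: main.
move=> H; apply: NNPP => nH.
have := main (fNot phi) Hp v Hv nH; done.
Qed.
End KL.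


Section Small.
Variable kappa : Type.

Lemma inj_seq (gN : nat -> kappa) : (forall x y, gN x = gN y -> x = y) ->
  forall y0, exists z : nat -> kappa, z 0 = y0 /\ (forall x y, z x = z y -> x = y).
Proof.
move=> Hg y0; case: (classic (exists k0, y0 = gN k0)) => [[k0 ->]|nr].
- exists (fun j => gN (k0 + j)); split; first by rewrite addn0.
  by move=> x y /Hg /eqP; rewrite eqn_add2l => /eqP.
- exists (fun j => match j with 0 => y0 | S j' => gN j' end); split=> //.
  case=> [|x] [|y] //=.
  + by move=> E; exfalso; apply: nr; exists y.
  + by move=> E; exfalso; apply: nr; exists x.
  + by move/Hg => ->.
Qed.

Lemma avoid (gN : nat -> kappa) : (forall x y, gN x = gN y -> x = y) ->
  forall y0, exists iota : kappa -> kappa, (forall x y, iota x = iota y -> x = y) /\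
    (forall y, iota y <> y0).
Proof.
move=> Hg y0; have [z [z0 Hz]] := inj_seq Hg y0.
pose iota := fun y => match excluded_middle_informative (exists j, y = z j) with
  | left H => z (S (proj1_sig (constructive_indefinite_description _ H)))
  | right _ => y end.
exists iota; split.
- move=> x y; rewrite /iota.
  case: excluded_middle_informative => Hx; case: excluded_middle_informative => Hy.
  + case: constructive_indefinite_description => j /= ->.
    case: constructive_indefinite_description => j' /= -> /Hz [->] //.
  + case: constructive_indefinite_description => j /= -> E.
    by exfalso; apply: Hy; exists (S j).
  + case: constructive_indefinite_description => j /= -> E.
    by exfalso; apply: Hx; exists (S j).
  + by [].
- move=> y; rewrite /iota; case: excluded_middle_informative => Hy.
  + case: constructive_indefinite_description => j /= _; rewrite -z0 => /Hz //.
  + move=> E; apply: Hy; exists 0; by rewrite z0.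
Qed.

Lemma small_ext X (A B : X -> Prop) : (forall x, A x <-> B x) -> small kappa A -> small kappa B.
Proof.
move=> H; have -> // : A = B.
by apply: functional_extensionality => x; apply: propositional_extensionality.
Qed.

Lemma small_add1 X (A : X -> Prop) (c : X) : lt_card nat kappa -> small kappa A ->
  small kappa (fun x => A x \/ x = c).
Proof.
move=> [[gN Hg] _] [[fA HfA] Hno].
split.
- have [iota [Hi Hi0]] := avoid Hg (gN 0).
  exists (fun x : {x | A x \/ x = c} => match excluded_middle_informative (A (proj1_sig x)) with
    | left H => iota (fA (exist _ (proj1_sig x) H)) | right _ => gN 0 end).
  move=> [x Hx] [y Hy] /=.
  case: excluded_middle_informative => Ax; case: excluded_middle_informative => Ay.
  + move/Hi/HfA => [E]; subst y; congr exist; exact: proof_irrelevance.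
  + by move=> E; exfalso; apply: (Hi0 _ E).
  + by move=> E; exfalso; apply: (Hi0 _ (esym E)).
  + move=> _; have Ex : x = c by case: Hx.
    have Ey : y = c by case: Hy.
    subst; congr exist; exact: proof_irrelevance.
- move=> [H HH]; apply: Hno.
  case: (classic (exists y0, ~ A (proj1_sig (H y0)))) => [[y0 ny0]|all].
  + have [iota [Hi Hi0]] := avoid Hg y0.
    have HA : forall y, A (proj1_sig (H (iota y))).
      move=> y; apply: NNPP => nA.
      have E1 : proj1_sig (H (iota y)) = c by case: (H (iota y)) nA => /= x [].
      have E2 : proj1_sig (H y0) = c by case: (H y0) ny0 => /= x [].
      apply: (Hi0 y); apply: HH; move: E1 E2.
      case: (H (iota y)) => x1 p1; case: (H y0) => x2 p2 /= e1 e2; subst x1 x2.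
      congr exist; exact: proof_irrelevance.
    exists (fun y => exist _ (proj1_sig (H (iota y))) (HA y)).
    move=> x y [E]; apply: Hi; apply: HH; move: E.
    case: (H (iota x)) => x1 p1; case: (H (iota y)) => x2 p2 /= e; subst x2.
    congr exist; exact: proof_irrelevance.
  + have HA : forall y, A (proj1_sig (H y)).
      move=> y; apply: NNPP => nA; apply: all; by exists y.
    exists (fun y => exist _ (proj1_sig (H y)) (HA y)).
    move=> x y [E]; apply: HH; move: E.
    case: (H x) => x1 p1; case: (H y) => x2 p2 /= e; subst x2.
    congr exist; exact: proof_irrelevance.
Qed.

Lemma small_list X (A : X -> Prop) (l : list X) : lt_card nat kappa -> small kappa A ->
  small kappa (fun x => A x \/ List.In x l).
Proof.
move=> Hk HA; elim: l => [|a l IH].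
- by apply: (small_ext _ HA) => x /=; tauto.
- apply: (small_ext _ (small_add1 a Hk IH)) => x /=.
  split=> [[[H|H]|H]|[H|[H|H]]]; subst; auto.
Qed.

End Small.

Lemma In_mem (T : eqType) (x : T) (s : list T) : x \in s -> List.In x s.
Proof.
elim: s => [|a s IH] //=; rewrite seq.in_cons => /orP [/eqP ->|/IH]; tauto.
Qed.

Lemma add_tuple_list L (C : structure L) (E : C -> Prop) m (a : 'I_m -> C) x :
  add_tuple E a x <-> E x \/ List.In x (map a (enum 'I_m)).
Proof.
rewrite /add_tuple; split=> -[H|H]; try tauto; right.
- case: H => i ->; apply: List.in_map; apply: In_mem; by rewrite mem_enum.
- case/List.in_map_iff: H => i [<- _]; by exists i.
Qed.

Lemma small_add_tuple kappa L (C : structure L) (E : C -> Prop) m (a : 'I_m -> C) :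
  lt_card nat kappa -> small kappa E -> small kappa (add_tuple E a).
Proof.
move=> Hk HE; apply: (small_ext _ (small_list (map a (enum 'I_m)) Hk HE)).
move=> x; by rewrite add_tuple_list.
Qed.


Section Basic.
Variable L : language.
Variable C : structure L.

Lemma sat1_tuple (phi : fml C) b : sat1 phi b <-> sat_tuple (fun _ : 'I_1 => b) phi.
Proof.
split=> [H v Hv|H v Hv].
- apply: H; exact: (Hv ord0).
- apply: H => -[[|k] Hk] //=.
Qed.

Lemma sat_tuple_aut (s : C -> C) (A : C -> Prop) m (a : 'I_m -> C) (phi : fml C) :
  automorphism s -> (forall x, A x -> s x = x) -> fparams A phi ->
  sat_tuple a phi -> sat_tuple (fun i => s (a i)) phi.
Proof.
move=> Hs HA Hp H v Hv.
have [s' [_ [H1 H2]]] := aut_inv Hs.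
have E : (fun k => s (s' (v k))) = v by apply: functional_extensionality => k; rewrite H2.
rewrite -E -(sat_aut_fix (fun k => s' (v k)) Hs HA Hp).
by apply: H => i; rewrite Hv H1.
Qed.

Lemma sat1_aut (s : C -> C) (A : C -> Prop) (phi : fml C) x :
  automorphism s -> (forall x, A x -> s x = x) -> fparams A phi ->
  sat1 phi x -> sat1 phi (s x).
Proof.
move=> Hs HA Hp; rewrite !sat1_tuple => H.
exact: (sat_tuple_aut Hs HA Hp H).
Qed.

Lemma dcl_fixed (s : C -> C) (A : C -> Prop) x :
  automorphism s -> (forall x, A x -> s x = x) -> dcl A x -> s x = x.
Proof.
move=> Hs HA [phi [[Hp Hf] Hd]]; apply/Hd.
apply: (sat1_aut Hs HA Hp); exact/Hd.
Qed.

Lemma dcl_mono (A B : C -> Prop) x : (forall y, A y -> B y) -> dcl A x -> dcl B x.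
Proof.
move=> H [phi [[Hp Hf] Hd]]; exists phi; split=> //; split=> //.
exact: fparams_mono Hp.
Qed.

Lemma acl_mono (A B : C -> Prop) x : (forall y, A y -> B y) -> acl A x -> acl B x.
Proof.
move=> H [phi [[Hp Hf] Hd]]; exists phi; split=> //; split=> //.
exact: fparams_mono Hp.
Qed.

Lemma dcl_acl (A : C -> Prop) x : dcl A x -> acl A x.
Proof.
move=> [phi [H Hd]]; exists phi; split=> //; split; first exact/Hd.
by exists (x :: nil) => c /Hd ->; left.
Qed.

Lemma dcl_self (A : C -> Prop) x : A x -> dcl A x.
Proof.
move=> Ax; exists (fEq (tvar 0) (tpar x)); split.
- split; first by split.
  by move=> k [/= <-|//]; apply/ltP.
- move=> c; split=> [H|-> v Hv /=]; last by rewrite Hv.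
  exact: (H (fun _ => c)).
Qed.

Lemma acl_self (A : C -> Prop) x : A x -> acl A x.
Proof. by move=> /dcl_self /dcl_acl. Qed.

Lemma sat1_and (phi psi : fml C) x : sat1 (fAnd phi psi) x <-> sat1 phi x /\ sat1 psi x.
Proof.
split=> [H|[H1 H2] v Hv]; last by split; [apply: H1|apply: H2].
by split=> v Hv; case: (H v Hv).
Qed.

Lemma LB_and m (A : C -> Prop) (phi psi : fml C) :
  LB_formula m A phi -> LB_formula m A psi -> LB_formula m A (fAnd phi psi).
Proof. by move=> [H1 H2] [H3 H4]; split; [split|move=> k [/H2|/H4]]. Qed.

Lemma LB_not m (A : C -> Prop) (phi : fml C) :
  LB_formula m A phi -> LB_formula m A (fNot phi).
Proof. by []. Qed.

Lemma LB_mono m (A B : C -> Prop) (phi : fml C) :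
  (forall x, A x -> B x) -> LB_formula m A phi -> LB_formula m B phi.
Proof. by move=> H [H1 H2]; split=> //; apply: fparams_mono H1. Qed.

Lemma elementary_mono (A B : C -> Prop) f :
  (forall x, A x -> B x) -> elementary_on B f -> elementary_on A f.
Proof.
move=> H Hf phi Hp v Hv; apply: Hf; first exact: fparams_mono Hp.
by move=> k; apply: H.
Qed.

Definition finsat (X : fml C -> Prop) :=
  forall l, (forall phi, List.In phi l -> X phi) -> exists v : nat -> C, forall phi, List.In phi l -> sat id v phi.

End Basic.

Section Monster.
Variable L : language.
Variable C : structure L.
Variable kappa : Type.
Hypothesis HC : monster C kappa.

Lemma conj_aut (A A0 : C -> Prop) m (b b' : 'I_m -> C) :
  small kappa A0 -> (forall x, A0 x -> A x) ->
  (forall chi, LB_formula m A chi -> sat_tuple b chi -> sat_tuple b' chi) ->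
  exists s, automorphism s /\ (forall x, A0 x -> s x = x) /\ (forall i, s (b i) = b' i).
Proof.
move=> HA0 Hsub HT.
case: (monster_inhabited HC) => c0.
have [f [Hf [fA fb]]] := KL c0 HT.
have Hf0 : elementary_on (add_tuple A0 b) f.
  apply: elementary_mono Hf => x [H|H]; [left; exact: Hsub|by right].
have [s [Hs Hsf]] := monster_homogeneous HC (small_add_tuple b (monster_kappa_uncountable HC) HA0) Hf0.
exists s; split=> //; split.
- move=> x Hx; rewrite Hsf ?fA //; [exact: Hsub|by left].
- move=> i; rewrite Hsf ?fb //; right; by exists i.
Qed.

Lemma galois_dcl (A : C -> Prop) b : small kappa A -> acl A b ->
  (forall s, automorphism s -> (forall x, A x -> s x = x) -> s b = b) -> dcl A b.
Proof.
move=> HA [phi [LBphi [Hb [l Hl]]]] Hfix.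
have [chi [LBchi [Hchi Hsep]]] : exists chi, LB_formula 1 A chi /\ sat1 chi b /\
    forall c, List.In c l -> c <> b -> ~ sat1 chi c.
  elim: l {Hl} => [|c l [chi [H1 [H2 H3]]]]; first by exists phi.
  case: (classic (c = b)) => [->|ncb].
  - exists chi; split=> //; split=> // c' [<-|/H3] //.
  - case: (classic (exists psi, LB_formula 1 A psi /\ sat1 psi b /\ ~ sat1 psi c)) => [[psi [P1 [P2 P3]]]|nsep].
    + exists (fAnd chi psi); split; first exact: LB_and.
      split; first by apply/sat1_and.
      move=> c' [<- _|Hc' nc'] /sat1_and [K1 K2] //.
      exact: (H3 c' Hc' nc').
    + exfalso; apply: ncb.
      have HT : forall psi, LB_formula 1 A psi -> sat_tuple (fun _ : 'I_1 => b) psi ->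
                 sat_tuple (fun _ : 'I_1 => c) psi.
        move=> psi Lpsi /sat1_tuple Hpsi; apply/sat1_tuple; apply: NNPP => nc.
        apply: nsep; by exists psi.
      have [s [Hs [HsA Hsb]]] := conj_aut HA (fun x H => H) HT.
      by rewrite -(Hsb ord0) Hfix.
exists (fAnd phi chi); split; first exact: LB_and.
move=> c; split=> [/sat1_and [K1 K2]|->]; last by apply/sat1_and.
apply: NNPP => ncb; exact: (Hsep c (Hl c K1) ncb K2).
Qed.

End Monster.


Section Ext.
Variable L : language.
Variable C : structure L.

Lemma remove_one (X : fml C -> Prop) (phi : fml C) l1 :
  (forall psi, List.In psi l1 -> X psi \/ psi = phi) ->
  exists l, (forall psi, List.In psi l -> X psi) /\
    forall v, (forall psi, List.In psi l -> sat id v psi) -> sat id v phi ->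
      forall psi, List.In psi l1 -> sat id v psi.
Proof.
elim: l1 => [|a l1 IH] H; first by exists nil.
have [l [Hl Hv]] : exists l, (forall psi, List.In psi l -> X psi) /\
    forall v, (forall psi, List.In psi l -> sat id v psi) -> sat id v phi ->
      forall psi, List.In psi l1 -> sat id v psi.
  by apply: IH => psi Hp; apply: H; right.
case: (H a (or_introl erefl)) => [Xa|->].
- exists (a :: l); split=> [psi [<-|/Hl]//|v Hs Hp psi [<-|Hpsi]].
  + by apply: Hs; left.
  + by apply: Hv => // psi' H'; apply: Hs; right.
- exists l; split=> // v Hs Hp psi [<-|Hpsi] //; exact: Hv.
Qed.

Lemma ext_type (B : C -> Prop) m (r : fml C -> Prop) :
  (forall phi, r phi -> LB_formula m B phi) -> finsat r ->
  exists q, complete_type m B q /\ forall phi, r phi -> q phi.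
Proof.
move=> HrB Hr.
pose P := fun X : fml C -> Prop => (forall phi, X phi -> LB_formula m B phi) /\
   finsat (fun phi => X phi \/ r phi).
have [A [[PA1 PA2] Amax]] : exists A, P A /\ forall B', classical_sets.proper A B' -> ~ P B'.
  apply: classical_sets.Zorn_bigcup => F FP Ftot; split.
  - move=> phi [X FX Xphi]; exact: (proj1 (FP X FX)).
  - have key : forall l, (forall phi, List.In phi l ->
        (exists2 X, F X & X phi) \/ r phi) ->
        (forall phi, List.In phi l -> r phi) \/
        exists X, F X /\ forall phi, List.In phi l -> X phi \/ r phi.
      elim=> [|a l IH] H; first by left.
      have := IH (fun phi Hp => H phi (or_intror Hp)).
      case: (H a (or_introl erefl)) => [[X0 FX0 X0a]|ra].
      + case=> [allr|[X [FX HX]]].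
        * right; exists X0; split=> // phi [<-|/allr]; tauto.
        * right; case: (Ftot X X0 FX FX0) => sub.
          -- exists X0; split=> // phi [<-|/HX [/sub|]]; tauto.
          -- exists X; split=> // phi [<-|/HX]; [left; exact: sub|tauto].
      + case=> [allr|[X [FX HX]]].
        * left=> phi [<-|/allr] //.
        * right; exists X; split=> // phi [<-|/HX] //; tauto.
    move=> l Hl.
    case: (key l Hl) => [allr|[X [FX HX]]].
    + by apply: Hr.
    + exact: (proj2 (FP X FX)).
pose q := fun phi => A phi \/ r phi.
exists q; split; last by move=> phi; right.
split; [|split].
- by move=> phi [/PA1|/HrB].
- move=> phi Lphi; apply: NNPP => nq.
  have nq1 : ~ q phi by move=> H; apply: nq; left.
  have nq2 : ~ q (fNot phi) by move=> H; apply: nq; right.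
  have bad : forall psi, LB_formula m B psi -> ~ q psi ->
      exists l, (forall chi, List.In chi l -> q chi) /\
        forall v, (forall chi, List.In chi l -> sat id v chi) -> ~ sat id v psi.
    move=> psi Lpsi npsi.
    have notP : ~ P (fun chi => A chi \/ chi = psi).
      apply: Amax; split; first by move=> chi H; left.
      move=> H; apply: npsi; left; exact: (H psi (or_intror erefl)).
    have : ~ finsat (fun chi => (A chi \/ chi = psi) \/ r chi).
      move=> Hfs; apply: notP; split; last exact: Hfs. move=> chi /= [/PA1|->] //.
    move=> nfs; apply: NNPP => nex; apply: nfs => l1 Hl1.
    have [l [Hl Hv]] := @remove_one q psi l1 (fun chi H => ltac:(case: (Hl1 chi H) => [[?|?]|?]; rewrite /q; tauto)).
    apply: NNPP => nv; apply: nex; exists l; split=> // v Hlv Hpsi.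
    apply: nv; exists v; exact: Hv.
  have [l1 [Hl1 Hv1]] := bad phi Lphi nq1.
  have [l2 [Hl2 Hv2]] := bad (fNot phi) (LB_not Lphi) nq2.
  have [v Hv] := PA2 (l1 ++ l2) (fun chi H => ltac:(case: (in_app_or _ _ _ H) => [/Hl1|/Hl2] //)).
  case: (classic (sat id v phi)) => Hs.
  + apply: (Hv1 v) => // chi Hc; apply: Hv; apply: in_or_app; by left.
  + apply: (Hv2 v) => // chi Hc; apply: Hv; apply: in_or_app; by right.
- exact: PA2.
Qed.

End Ext.


Section Acl.
Variable L : language.
Variable C : structure L.
Variable kappa : Type.
Hypothesis HC : monster C kappa.

Lemma galois_acl (A : C -> Prop) e (O : list C) : small kappa A ->
  (forall s, automorphism s -> (forall x, A x -> s x = x) -> List.In (s e) O) -> acl A e.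
Proof.
move=> HA Horb; apply: NNPP => nacl.
pose r := fun phi : fml C => (LB_formula 1 A phi /\ sat1 phi e) \/
   exists o, List.In o O /\ phi = fNot (fEq (tvar 0) (tpar o)).
pose B := fun x => A x \/ List.In x O.
have rB : forall phi, r phi -> LB_formula 1 B phi.
  move=> phi [[H _]|[o [Ho ->]]].
  - apply: LB_mono H => x; rewrite /B; tauto.
  - split; first by split=> //; right.
    by move=> k [/= <-|//].
have rfs : finsat r.
  move=> l Hl.
  have [chi [Lchi [Hchi Hall]]] : exists chi, LB_formula 1 A chi /\ sat1 chi e /\
      forall v, sat id v chi -> forall psi, List.In psi l -> LB_formula 1 A psi /\ sat1 psi e ->
        sat id v psi.
    elim: l Hl => [|a l IH] Hl.
    - exists (fEq (tvar 0) (tvar 0)); split; last by [].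
      split; first by [].
      by move=> k [/= <-|/= <-].
    - have [chi [Lchi [Hchi Hall]]] := IH (fun psi H => Hl psi (or_intror H)).
      case: (classic (LB_formula 1 A a /\ sat1 a e)) => [[La Ha]|na].
      + exists (fAnd a chi); split; first exact: LB_and.
        split; first by apply/sat1_and.
        move=> v [Hv1 Hv2] psi [<-|Hp] // Hpsi; exact: Hall.
      + exists chi; split=> //; split=> // v Hv psi [<-|Hp] // Hpsi; exact: Hall.
  have [c [Hc nc]] : exists c, sat1 chi c /\ ~ List.In c O.
    apply: NNPP => nex; apply: nacl; exists chi; split=> //; split=> //.
    exists O => c Hc; apply: NNPP => nc; apply: nex; by exists c.
  exists (fun _ => c) => psi Hpsi.
  case: (Hl psi Hpsi) => [H|[o [Ho ->]]].
  - by apply: (Hall _ (Hc _ erefl)).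
  - by move=> /= E; apply: nc; rewrite E.
have [q [Hq rq]] := ext_type rB rfs.
have smB : small kappa B := small_list O (monster_kappa_uncountable HC) HA.
have [d Hd] := monster_saturated HC smB Hq.
have HT : forall chi, LB_formula 1 A chi -> sat_tuple (fun _ : 'I_1 => e) chi -> sat_tuple d chi.
  move=> chi Lchi /sat1_tuple Hchi; apply: Hd; apply: rq; left; by split.
have [s [Hs [HsA Hse]]] := conj_aut HC HA (fun x H => H) HT.
have Hin := Horb s Hs HsA; rewrite (Hse ord0) in Hin.
have := Hd _ (rq _ (or_intror (ex_intro _ (d ord0) (conj Hin erefl)))).
case: (monster_inhabited HC) => c0.
move/(_ (vext d c0) (vextE d c0)) => /=; by rewrite (vextE d c0 ord0).
Qed.

End Acl.


Section PL.
Variable L : language.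

Fixpoint tpl P (t : term L P) : list P :=
  match t with
  | tvar _ => nil
  | tpar c => c :: nil
  | @tfun _ _ f args => List.concat (List.map (fun i => tpl (args i)) (enum 'I_(farity f)))
  end.

Fixpoint fpl P (phi : formula L P) : list P :=
  match phi with
  | fEq t1 t2 => List.app (tpl t1) (tpl t2)
  | @fRel _ _ r args => List.concat (List.map (fun i => tpl (args i)) (enum 'I_(rarity r)))
  | fNot psi => fpl psi
  | fAnd psi chi => List.app (fpl psi) (fpl chi)
  | fEx _ psi => fpl psi
  end.

Lemma in_concat_enum P k (g : 'I_k -> list P) c :
  List.In c (List.concat (List.map g (enum 'I_k))) <-> exists i, List.In c (g i).
Proof.
rewrite List.in_concat; split=> [[x [/List.in_map_iff [i [<- _]] H]]|[i H]]; first by exists i.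
exists (g i); split=> //; apply: List.in_map; apply: In_mem; by rewrite mem_enum.
Qed.

Lemma tpl_params P (t : term L P) : tparams (fun c => List.In c (tpl t)) t.
Proof.
elim/term_ind': t => [k|c|f args IH] //=; first by left.
move=> i; apply: tparams_mono (IH i) => c H; apply/in_concat_enum; by exists i.
Qed.

Lemma tpl_sub P (A : P -> Prop) (t : term L P) : tparams A t -> forall c, List.In c (tpl t) -> A c.
Proof.
elim/term_ind': t => [k|c|f args IH] //=; first by move=> H c' [<-|].
by move=> H c /in_concat_enum [i Hi]; apply: (IH i).
Qed.

Lemma fpl_params P (phi : formula L P) : fparams (fun c => List.In c (fpl phi)) phi.
Proof.
elim: phi => [t1 t2|r args|psi IH|psi IH chi IH'|k psi IH] //=.
- split; [apply: tparams_mono (tpl_params t1)|apply: tparams_mono (tpl_params t2)] => c H;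
  apply: List.in_or_app; tauto.
- move=> i; apply: tparams_mono (tpl_params (args i)) => c H; apply/in_concat_enum; by exists i.
- split; [apply: fparams_mono IH|apply: fparams_mono IH'] => c H; apply: List.in_or_app; tauto.
Qed.

Lemma fpl_sub P (A : P -> Prop) (phi : formula L P) : fparams A phi -> forall c, List.In c (fpl phi) -> A c.
Proof.
elim: phi => [t1 t2|r args|psi IH|psi IH chi IH'|k psi IH] //=.
- move=> [H1 H2] c; rewrite List.in_app_iff => -[H|H]; [exact (@tpl_sub P A t1 H1 c H)|exact (@tpl_sub P A t2 H2 c H)].
- by move=> H c /in_concat_enum [i Hi]; exact (@tpl_sub P A (args i) (H i) c Hi).
- by move=> [H1 H2] c; rewrite List.in_app_iff => -[H|H]; [exact: IH H1 _ H|exact: IH' H2 _ H].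
Qed.
End PL.

Lemma all_tuples (X : Type) (lall : list X) k (c0 : X) :
  exists Tall : list ('I_k -> X), forall t : 'I_k -> X, (forall i, List.In (t i) lall) ->
    exists t', List.In t' Tall /\ forall i, t i = t' i.
Proof.
exists (List.map (fun F : {ffun 'I_k -> 'I_(length lall)} => fun i => List.nth (F i) lall c0)
   (enum {ffun 'I_k -> 'I_(length lall)})).
move=> t Ht.
have : forall i, exists j : 'I_(length lall), List.nth j lall c0 = t i.
  move=> i; have [j [/ltP jl E]] := List.In_nth _ _ c0 (Ht i).
  by exists (Ordinal jl).
case/fin_all_exists => u Hu.
exists (fun i => List.nth (finfun u i) lall c0); split.
- apply: List.in_map; apply: In_mem; by rewrite mem_enum.
- by move=> i; rewrite ffunE Hu.
Qed.


Section Main1.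
Variable L : language.
Variable C : structure L.
Variable kappa : Type.
Hypothesis HC : monster C kappa.
Variable E : C -> Prop.
Hypothesis HE : small kappa E.
Variable n : nat.
Variable p : fml C -> Prop.
Hypothesis Hp : complete_type n E p.

Definition tp (a : 'I_n -> C) : fml C -> Prop :=
  fun phi => LB_formula n (acl E) phi /\ sat_tuple a phi.

Lemma exists_real : exists a : 'I_n -> C, realizes a p.
Proof. have [a Ha] := monster_saturated HC HE Hp; by exists a. Qed.

Lemma tp_complete (a : 'I_n -> C) : complete_type n (acl E) (tp a).
Proof.
case: (monster_inhabited HC) => c0.
split; [by move=> phi []|split].
- move=> phi Lphi; rewrite /tp; case: (classic (sat id (vext a c0) phi)) => H.
  + left; split=> //; exact: (proj2 (sat_tuple_vext a c0 Lphi) H).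
  + right; split; first exact: LB_not.
    exact: (proj2 (sat_tuple_vext a c0 (LB_not Lphi)) H).
- move=> l Hl; exists (vext a c0) => phi /Hl [Lphi Hs].
  exact/(sat_tuple_vext _ _ Lphi).
Qed.

Lemma p_tp (a : 'I_n -> C) : realizes a p -> forall phi, p phi -> tp a phi.
Proof.
move=> Ha phi Hphi; split; last exact: Ha.
apply: LB_mono (proj1 Hp _ Hphi) => x; exact: acl_self.
Qed.

Lemma sat_tuple_not (phi : fml C) A m : LB_formula m A phi -> forall (b : 'I_m -> C),
  sat_tuple b phi -> sat_tuple b (fNot phi) -> False.
Proof.
move=> Lphi b H1 H2; case: (monster_inhabited HC) => c0.
exact: (H2 (vext b c0) (vextE b c0) (H1 (vext b c0) (vextE b c0))).
Qed.

Lemma real_aut (a : 'I_n -> C) s : realizes a p -> automorphism s -> (forall x, E x -> s x = x) ->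
  realizes (fun i => s (a i)) p.
Proof.
move=> Ha Hs HsE phi Hphi; apply: (sat_tuple_aut Hs HsE (proj1 (proj1 Hp _ Hphi))).
exact: Ha.
Qed.


Lemma one_three : acl_stationary n E p ->
  forall a : 'I_n -> C, realizes a p -> primary E (dcl (add_tuple E a)).
Proof.
move=> [q [Hq [pq Huniq]]] a Ha.
have tpq : forall b : 'I_n -> C, realizes b p -> forall phi, tp b phi <-> q phi.
  move=> b Hb; apply: Huniq; [exact: tp_complete|exact: p_tp].
split.
- move=> x Ex; apply: dcl_self; by left.
- move=> x; split.
  + move=> [Hd Ha'].
    apply: (galois_dcl HC HE Ha') => s Hs HsE.
    have Hsa := real_aut Ha Hs HsE.
    have HT : forall chi, LB_formula n (acl E) chi -> sat_tuple (fun i => s (a i)) chi -> sat_tuple a chi.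
      move=> chi Lchi H.
      have : tp a chi by apply/(tpq a Ha)/(tpq _ Hsa).
      by case.
    have sm : small kappa (fun y => E y \/ y = x) := small_add1 x (monster_kappa_uncountable HC) HE.
    have sub : forall y, E y \/ y = x -> acl E y.
      by move=> y [Ey|->]; [exact: acl_self|].
    have [t [Ht [HtA Hta]]] := conj_aut HC sm sub HT.
    have Hts : automorphism (fun y => t (s y)) := aut_comp Ht Hs.
    have fixEa : forall y, add_tuple E a y -> t (s y) = y.
      move=> y [Ey|[i ->]]; last exact: Hta.
      by rewrite HsE // HtA //; left.
    have fixK : forall y, dcl (add_tuple E a) y -> t (s y) = y.
      move=> y; exact: dcl_fixed Hts fixEa.
    have := dcl_fixed Hts fixK Hd.
    move=> H; apply: (@aut_inj _ _ t Ht); rewrite H; exact: (esym (HtA x (or_intror erefl))).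
  + move=> Hd; split; last exact: dcl_acl.
    apply: dcl_mono Hd => y Ey; apply: dcl_self; by left.
Qed.

End Main1.


Definition asb (P : Prop) : bool := if excluded_middle_informative P then true else false.
Lemma asbP (P : Prop) : asb P = true <-> P.
Proof. by rewrite /asb; case: excluded_middle_informative. Qed.

Section Main2.
Variable L : language.
Variable C : structure L.
Variable kappa : Type.
Hypothesis HC : monster C kappa.
Hypothesis HFS : codes_finite_sets C.
Variable E : C -> Prop.
Hypothesis HE : small kappa E.
Variable n : nat.
Variable p : fml C -> Prop.
Hypothesis Hp : complete_type n E p.
Variable c0 : C.
Variable a : 'I_n -> C.
Hypothesis Ha : realizes a p.
Hypothesis Hprim : primary E (dcl (add_tuple E a)).
Variable q' : fml C -> Prop.
Hypothesis Hq' : complete_type n (acl E) q'.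
Hypothesis pq' : forall phi, p phi -> q' phi.
Variable phi : fml C.
Hypothesis Hqphi : q' phi.
Hypothesis Hnot : ~ sat_tuple a phi.

Let cl := fpl phi.
Let k := length cl.
Let c : 'I_k -> C := fun i => List.nth i cl c0.

Lemma c_in i : List.In (c i) cl.
Proof. apply: List.nth_In; apply/ltP; exact: ltn_ord. Qed.

Lemma cl_c x : List.In x cl -> exists i, c i = x.
Proof.
move=> H; have [j [/ltP jk E']] := List.In_nth _ _ c0 H.
by exists (Ordinal jk).
Qed.

Lemma Lphi : LB_formula n (acl E) phi.
Proof. exact: (proj1 Hq' _ Hqphi). Qed.

Lemma acl_cl x : List.In x cl -> acl E x.
Proof. move=> H; exact: (fpl_sub (proj1 Lphi) H). Qed.

Definition good (s : C -> C) := automorphism s /\ forall x, E x -> s x = x.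

Lemma stepA : exists a' : 'I_n -> C, realizes a' p /\ sat_tuple a' phi.
Proof.
pose B1 := fun x => E x \/ List.In x cl.
have sub1 : forall x, B1 x -> acl E x.
  by move=> x [Ex|Hx]; [exact: acl_self|exact: acl_cl].
pose q'' := fun psi => q' psi /\ LB_formula n B1 psi.
have Hq'' : complete_type n B1 q''.
  split; [by move=> psi []|split].
  - move=> psi Lpsi; case: (proj1 (proj2 Hq') psi (LB_mono sub1 Lpsi)) => H.
    + by left.
    + by right; split=> //; exact: LB_not.
  - move=> l Hl; apply: (proj2 (proj2 Hq')) => psi /Hl []; done.
have sm : small kappa B1 := small_list cl (monster_kappa_uncountable HC) HE.
have [a' Ha'] := monster_saturated HC sm Hq''.
exists a'; split.
- move=> psi Hpsi; apply: Ha'; split; first exact: pq'.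
  apply: LB_mono (proj1 Hp _ Hpsi) => x Ex; by left.
- apply: Ha'; split=> //; split; last exact: (proj2 Lphi).
  apply: fparams_mono (fpl_params phi) => x Hx; by right.
Qed.

Lemma stepB (a' : 'I_n -> C) : realizes a' p -> exists sg, good sg /\ forall i, sg (a' i) = a i.
Proof.
move=> Ha'.
have HT : forall chi, LB_formula n E chi -> sat_tuple a' chi -> sat_tuple a chi.
  move=> chi Lchi H; case: (proj1 (proj2 Hp) chi Lchi) => Hc; first exact: Ha.
  exfalso; exact: (sat_tuple_not HC Lchi H (Ha' _ Hc)).
have [s [Hs [HsE Hsa]]] := conj_aut HC HE (fun x H => H) HT.
by exists s.
Qed.

Lemma lall_ex : exists lall : list C, forall s, good s -> forall x, List.In x cl -> List.In (s x) lall.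
Proof.
have : forall x, List.In x cl -> acl E x by exact: acl_cl.
elim: (cl) => [|x l IH] Hl; first by exists nil.
have [lall Hlall] := IH (fun y H => Hl y (or_intror H)).
have [alpha [[Pa Fa] [Ha' [l1 Hl1]]]] := Hl x (or_introl erefl).
exists (List.app l1 lall) => s [Hs HsE] y [<-|Hy]; apply: List.in_or_app.
- left; apply: Hl1; exact: sat1_aut Hs HsE Pa Ha'.
- right; exact: Hlall.
Qed.

Definition orb (t : 'I_k -> C) := exists s, good s /\ forall i, t i = s (c i).
Definition Phi (t : 'I_k -> C) := forall s, good s -> (forall i, s (c i) = t i) ->
  forall v : nat -> C, (forall i : 'I_n, v i = a i) -> sat s v phi.

Lemma orb_ext t t' : orb t -> (forall i, t i = t' i) -> orb t'.
Proof. move=> [s [Hs Ht]] E'; exists s; split=> // i; by rewrite -E'. Qed.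

Lemma Phi_ext t t' : Phi t -> (forall i, t i = t' i) -> Phi t'.
Proof. move=> H E' s Hs Hst; apply: H => // i; by rewrite Hst E'. Qed.

Lemma orb_aut r t : good r -> orb t -> orb (fun i => r (t i)).
Proof.
move=> [Hr HrE] [s [[Hs HsE] Ht]]; exists (fun x => r (s x)); split.
- split; first exact: aut_comp.
  by move=> x Ex; rewrite HsE // HrE.
- by move=> i; rewrite Ht.
Qed.

Lemma good_inv r : good r -> exists r', good r' /\ (forall x, r' (r x) = x) /\ (forall x, r (r' x) = x).
Proof.
move=> [Hr HrE]; have [r' [Hr' [H1 H2]]] := aut_inv Hr.
exists r'; split=> //; split=> // x Ex; by rewrite -{1}(HrE x Ex) H1.
Qed.

Lemma Phi_aut r t : good r -> (forall i, r (a i) = a i) -> Phi t -> Phi (fun i => r (t i)).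
Proof.
move=> Hgr Hra HPhi s Hgs Hst v Hv.
have [r' [Hgr' [H1 H2]]] := good_inv Hgr.
have Hg0 : good (fun x => r' (s x)).
  case: Hgr' => Hr' Hr'E; case: Hgs => Hs HsE; split; first exact: aut_comp.
  by move=> x Ex; rewrite HsE // Hr'E.
have Hr'a : forall i, r' (a i) = a i by move=> i; rewrite -{1}(Hra i) H1.
have e1 : forall i, r' (s (c i)) = t i by move=> i; rewrite Hst H1.
have e2 : forall i : 'I_n, r' (v i) = a i by move=> i; rewrite Hv Hr'a.
have := HPhi _ Hg0 e1 (fun j => r' (v j)) e2.
rewrite (sat_aut _ phi (proj1 Hgr)).
have -> : (fun c => r (r' (s c))) = s by apply: functional_extensionality => x; rewrite H2.
have -> // : (fun j => r (r' (v j))) = v by apply: functional_extensionality => x; rewrite H2.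
Qed.

Section Lists.
Variable lall : list C.
Hypothesis Hlall : forall s, good s -> forall x, List.In x cl -> List.In (s x) lall.
Variable Tall : list ('I_k -> C).
Hypothesis HTall : forall t : 'I_k -> C, (forall i, List.In (t i) lall) ->
    exists t', List.In t' Tall /\ forall i, t i = t' i.

Let Sorb := List.filter (fun t => asb (orb t)) Tall.
Let Ssub := List.filter (fun t => asb (orb t /\ Phi t)) Tall.

Lemma memS t : mem_tuple t Sorb <-> orb t.
Proof.
split.
- move=> [t' [/List.filter_In [_ /asbP H] E']]; apply: orb_ext H _ => i; by rewrite E'.
- move=> H; have [s [Hs Ht]] := H.
  have [t' [Ht' E']] : exists t', List.In t' Tall /\ forall i, t i = t' i.
    apply: HTall => i; rewrite Ht; apply: Hlall => //; exact: c_in.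
  exists t'; split=> //; apply/List.filter_In; split=> //; apply/asbP.
  exact: orb_ext H E'.
Qed.

Lemma memS' t : mem_tuple t Ssub <-> orb t /\ Phi t.
Proof.
split.
- move=> [t' [/List.filter_In [_ /asbP [H1 H2]] E']]; split.
  + apply: orb_ext H1 _ => i; by rewrite E'.
  + apply: Phi_ext H2 _ => i; by rewrite E'.
- move=> [H HP]; have [s [Hs Ht]] := H.
  have [t' [Ht' E']] : exists t', List.In t' Tall /\ forall i, t i = t' i.
    apply: HTall => i; rewrite Ht; apply: Hlall => //; exact: c_in.
  exists t'; split=> //; apply/List.filter_In; split=> //; apply/asbP.
  split; [exact: orb_ext H E'|exact: Phi_ext HP E'].
Qed.

Lemma memS'_in t : List.In t Ssub -> mem_tuple t Ssub.
Proof. by move=> H; exists t. Qed.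

Lemma setwise_sub r : good r -> (forall i, r (a i) = a i) -> fixes_setwise r Ssub.
Proof.
move=> Hgr Hra.
have key : forall r, good r -> (forall i, r (a i) = a i) -> forall t, mem_tuple t Ssub ->
    mem_tuple (fun i => r (t i)) Ssub.
  move=> r0 Hg0 Hr0 t /memS' [H1 H2]; apply/memS'; split; [exact: orb_aut|exact: Phi_aut].
split; first exact: key.
move=> u Hu; have [r' [Hgr' [H1 H2]]] := good_inv Hgr.
exists (fun i => r' (u i)); split; last by move=> i; rewrite H2.
apply: key => // i; by rewrite -{1}(Hra i) H1.
Qed.

Definition img (s : C -> C) := List.map (fun t : 'I_k -> C => fun i => s (t i)) Ssub.

Lemma mem_img s u : mem_tuple u (img s) <-> exists t, List.In t Ssub /\ forall i, u i = s (t i).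
Proof.
split.
- move=> [t' [/List.in_map_iff [t [<- Ht]] E']]; by exists t.
- move=> [t [Ht E']]; exists (fun i => s (t i)); split=> //.
  exact: (List.in_map (fun t : 'I_k -> C => fun i => s (t i))).
Qed.

Let N := length Sorb.
Definition beta (s : C -> C) : {ffun 'I_N -> bool} :=
  [ffun i : 'I_N => asb (mem_tuple (List.nth i Sorb c) (img s))].

Lemma img_sub s1 s : good s1 -> good s -> beta s1 = beta s ->
  forall u, mem_tuple u (img s) -> mem_tuple u (img s1).
Proof.
move=> Hg1 Hg Hb u /mem_img [t [Ht Eu]].
have [Ot _] := proj1 (memS' t) (memS'_in Ht).
have /memS [t'' [Ht'' E2]] := orb_aut Hg Ot.
have [i0 [/ltP i0N En]] := List.In_nth _ _ c Ht''.
have : beta s (Ordinal i0N) = true.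
  rewrite ffunE; apply/asbP; apply/mem_img; exists t; split=> // i.
  by rewrite /= En E2.
rewrite -Hb ffunE => /asbP /mem_img [t1 [Ht1 E1]].
apply/mem_img; exists t1; split=> // i.
by rewrite Eu E2 -E1 /= En.
Qed.

Lemma code_acl m (d : 'I_m -> C) :
  (forall s, automorphism s -> (fixes_setwise s Ssub <-> forall j, s (d j) = d j)) ->
  forall j, acl E (d j).
Proof.
move=> Hd j.
have key : forall s1 s, good s1 -> good s -> beta s1 = beta s -> s1 (d j) = s (d j).
  move=> s1 s Hg1 Hg Hb.
  have [s' [Hg' [H1 H2]]] := good_inv Hg.
  have Hgg : automorphism (fun x => s' (s1 x)) := aut_comp (proj1 Hg') (proj1 Hg1).
  have Hfs : fixes_setwise (fun x => s' (s1 x)) Ssub.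
    split.
    - move=> t [t2 [Ht2 E2]].
      have : mem_tuple (fun i => s1 (t2 i)) (img s1) by apply/mem_img; exists t2.
      move/(img_sub Hg Hg1 (esym Hb)) => /mem_img [t3 [Ht3 E3]].
      exists t3; split=> // i; by rewrite E2 E3 H1.
    - move=> u [u2 [Hu2 Eu]].
      have : mem_tuple (fun i => s (u2 i)) (img s) by apply/mem_img; exists u2.
      move/(img_sub Hg1 Hg Hb) => /mem_img [t4 [Ht4 E4]].
      exists t4; split; first by exists t4.
      by move=> i; rewrite -E4 H1 Eu.
  have := proj1 (Hd _ Hgg) Hfs j.
  by move=> E'; rewrite -{2}E' H2.
pose pick := fun bt : {ffun 'I_N -> bool} =>
  match excluded_middle_informative (exists s, good s /\ beta s = bt) with
  | left H => (proj1_sig (constructive_indefinite_description _ H)) (d j)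
  | right _ => d j
  end.
apply: (galois_acl HC (O := List.map pick (enum {ffun 'I_N -> bool})) HE).
move=> s Hs HsE.
have Hg : good s by split.
have -> : s (d j) = pick (beta s).
  rewrite /pick; case: excluded_middle_informative => [H|H].
  - case: constructive_indefinite_description => s1 [Hg1 Hb] /=.
    by rewrite (key s1 s).
  - by exfalso; apply: H; exists s.
apply: List.in_map; apply: In_mem; by rewrite mem_enum.
Qed.

Lemma core_false : False.
Proof.
have [m [d Hd]] := HFS Ssub.
have fixa : forall r, automorphism r -> (forall x, add_tuple E a x -> r x = x) -> forall j, r (d j) = d j.
  move=> r Hr Hra; apply: (proj1 (Hd r Hr)); apply: setwise_sub.
  - by split=> // x Ex; apply: Hra; left.
  - by move=> i; apply: Hra; right; exists i.
have dacl := code_acl Hd.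
have ddcl : forall j, dcl E (d j).
  move=> j; apply: (proj1 (proj2 Hprim (d j))); split; last exact: dacl.
  apply: (dcl_mono (A := add_tuple E a)) => [y Hy|]; first exact: dcl_self.
  apply: (galois_dcl HC (small_add_tuple a (monster_kappa_uncountable HC) HE)).
  - apply: acl_mono (dacl j) => y Ey; by left.
  - move=> r Hr Hra; exact: fixa.
have [a' [Ha' Sa']] := stepA.
have [sg [[Hsg HsgE] Hsga]] := stepB Ha'.
have fixd : forall j, sg (d j) = d j by move=> j; exact: dcl_fixed Hsg HsgE (ddcl j).
have Hfs := proj2 (Hd sg Hsg) fixd.
have memc : mem_tuple (fun i => sg (c i)) Ssub.
  apply/memS'; split; first by exists sg; split.
  move=> s [Hs HsE] Hsc v Hv.
  have [sg' [_ [H1 H2]]] := aut_inv Hsg.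
  have e3 : forall i : 'I_n, sg' (v i) = a' i by move=> i; rewrite Hv -(Hsga i) H1.
  have H := Sa' (fun j => sg' (v j)) e3.
  move: H; rewrite (sat_aut _ phi Hsg).
  have -> : (fun j => sg (sg' (v j))) = v by apply: functional_extensionality => x; rewrite H2.
  move=> H0; refine (proj1 (@sat_coinc _ _ _ (fun x => sg x) s phi v v _ _) H0) => //.
  apply: fparams_mono (fpl_params phi) => x /cl_c [i <-]; by rewrite Hsc.
have [t [Ht Et]] := proj2 Hfs _ memc.
have Etc : forall i, t i = c i by move=> i; apply: (aut_inj Hsg); exact: Et.
have [_ HPhi] := proj1 (memS' t) Ht.
have HPc := Phi_ext HPhi Etc.
apply: Hnot => v Hv.
exact: (HPc (fun x => x) (conj (@aut_id _ C) (fun x _ => erefl)) (fun i => erefl) v Hv).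
Qed.

End Lists.
End Main2.


Unset Implicit Arguments.

Lemma two_one L (C : structure L) kappa (HC : monster C kappa) (HFS : codes_finite_sets C)
  (E : C -> Prop) (HE : small kappa E) n (p : fml C -> Prop) (Hp : complete_type n E p)
  (a : 'I_n -> C) (Ha : realizes a p) (Hprim : primary E (dcl (add_tuple E a))) :
  acl_stationary n E p.
Proof.
case: (monster_inhabited HC) => c0.
exists (tp E a); split; first exact: (tp_complete HC).
split; first by move=> phi; apply: p_tp.
move=> q' Hq' pq'.
have fwd : forall phi, q' phi -> tp E a phi.
  move=> phi Hqphi; split; first exact: (proj1 Hq' _ Hqphi).
  apply: NNPP => Hnot.
  have [lall Hlall] := lall_ex Hq' Hqphi.
  have [Tall HTall] := all_tuples lall (length (fpl phi)) c0.
  exact: (core_false HC HFS HE Hp c0 Ha Hprim Hq' pq' Hqphi Hnot Hlall HTall).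
move=> phi; split; first exact: fwd.
move=> [Lphi Hs]; case: (proj1 (proj2 Hq') phi Lphi) => // H.
exfalso; have [_ Hs'] := fwd _ H.
exact: (sat_tuple_not HC Lphi Hs Hs').
Qed.

Theorem mainTheorem9 (L : language) (T : formula L Empty_set -> Prop)
  (C : structure L) (kappa : Type)
  (HT : complete_theory T) (HCT : models C T) (HC : monster C kappa)
  (HFS : codes_finite_sets C)
  (E : C -> Prop) (HE : small kappa E)
  (n : nat) (p : fml C -> Prop) (Hp : complete_type n E p) :
  (acl_stationary n E p <->
     exists a : 'I_n -> C, realizes a p /\ primary E (dcl (add_tuple E a))) /\
  (acl_stationary n E p <->
     forall a : 'I_n -> C, realizes a p -> primary E (dcl (add_tuple E a))).
Proof.
split; split.
- move=> Hst; have [a Ha] := exists_real HC HE Hp.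
  exists a; split=> //; exact: (one_three HC HE Hp Hst Ha).
- move=> [a [Ha Hprim]]; exact: (@two_one L C kappa HC HFS E HE n p Hp a Ha Hprim).
- move=> Hst a Ha; exact: (one_three HC HE Hp Hst Ha).
- move=> H; have [a Ha] := exists_real HC HE Hp.
  exact: (@two_one L C kappa HC HFS E HE n p Hp a Ha (H a Ha)).
Qed.
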